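(* Let $\mathcal H_A,\mathcal H_B$ be complex Hilbert spaces of finite dimensions $d_A,d_B$, let $\rho_{AB}$ be a positive definite density matrix on $\mathcal H_A\otimes\mathcal H_B$, let $\rho_A=\mathrm{tr}_B(\rho_{AB})$ be its partial trace over $B$, and let $\alpha>1$. Define \[ I_\alpha(A;B)_\rho=\inf_{\sigma_B} D_\alpha(\rho_{AB}\,\|\,\rho_A\otimes\sigma_B), \] where the infimum is over positive definite density matrices $\sigma_B$ on $\mathcal H_B$ and $D_\alpha(\rho\|\sigma)=\frac{1}{\alpha-1}\log\mathrm{tr}\,[\rho^\alpha\sigma^{1-\alpha}]$. Then \[ I_\alpha(A;B)_\rho\ \ge\ \frac{\alpha}{\alpha-1}\Big(\log(d_Ad_B)+\frac{1}{d_Ad_B}\log\det(\rho_{AB})\Big). \]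
   Context: A density matrix is a Hermitian positive semidefinite matrix with trace $1$. Real powers of positive definite matrices are defined by functional calculus. $\log$ denotes the logarithm to a fixed base greater than $1$. *)

(* Defs.v *)
From HB Require Import structures.
From mathcomp Require Import all_boot all_order all_algebra.
From mathcomp Require Import complex mxtens.
From mathcomp Require Import boolp classical_sets reals exp.

Set Implicit Arguments.
Unset Strict Implicit.
Unset Printing Implicit Defensive.

Import Order.TTheory GRing.Theory Num.Theory.
Local Open Scope ring_scope.
Local Open Scope complex_scope.

Section QDefs.
Variable R : realType.
Local Notation C := R[i].

Definition mxadj (m n : nat) (A : 'M[C]_(m, n)) : 'M[C]_(n, m) :=
  (map_mx (@conjc R) A)^T.

Definition hermitian (n : nat) (A : 'M[C]_n) : Prop := mxadj A = A.

(* positive semidefinite / positive definite (order on C: z >= 0 iff z real >= 0) *)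
Definition psd (n : nat) (A : 'M[C]_n) : Prop :=
  hermitian A /\ forall x : 'cV[C]_n, 0 <= (mxadj x *m A *m x) 0 0.

Definition posdef (n : nat) (A : 'M[C]_n) : Prop :=
  hermitian A /\ forall x : 'cV[C]_n, x != 0 -> 0 < (mxadj x *m A *m x) 0 0.

Definition density (n : nat) (A : 'M[C]_n) : Prop := psd A /\ \tr A = 1.

Definition unitary (n : nat) (U : 'M[C]_n) : Prop := U *m mxadj U = 1%:M.

(* real power of a positive definite matrix by functional calculus:
   if A = U diag(l) U^* with U unitary and l > 0, then A^s = U diag(l^s) U^*.
   (The value is independent of the chosen diagonalization.) *)
Definition mpow (n : nat) (A : 'M[C]_n) (s : R) : 'M[C]_n :=
  xget 0 [set B | exists (U : 'M[C]_n) (l : 'rV[R]_n),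
    [/\ unitary U, (forall j, 0 < l 0 j),
        A = U *m diag_mx (map_mx (fun x => x%:C) l) *m mxadj U &
        B = U *m diag_mx (map_mx (fun x => (powR x s)%:C) l) *m mxadj U]].

Definition logb (b x : R) : R := ln x / ln b.

Definition ptraceB (dA dB : nat) (rho : 'M[C]_(dA * dB)) : 'M[C]_dA :=
  \matrix_(i, i') \sum_(j < dB) rho (mxtens_index (i, j)) (mxtens_index (i', j)).

Definition Dalpha (b a : R) (n : nat) (rho sigma : 'M[C]_n) : R :=
  (a - 1)^-1 * logb b (complex.Re (\tr (mpow rho a *m mpow sigma (1 - a)))).

Definition Ialpha (b a : R) (dA dB : nat) (rho : 'M[C]_(dA * dB)) : R :=
  inf [set x | exists sigma : 'M[C]_dB,
         [/\ posdef sigma, density sigma &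
             x = Dalpha b a rho (ptraceB rho *t sigma)]].

End QDefs.

(* Main.v *)
Require Import Defs.
From HB Require Import structures.
From mathcomp Require Import all_boot all_order all_algebra.
From mathcomp Require Import complex mxtens.
From mathcomp Require Import boolp classical_sets reals exp.
From mathcomp Require Import spectral.
From mathcomp Require Import ring lra.

Set Implicit Arguments.
Unset Strict Implicit.
Unset Printing Implicit Defensive.
Import Order.TTheory GRing.Theory Num.Theory.
Local Open Scope ring_scope.
Local Open Scope complex_scope.

Section Aux.
Variable R : realType.
Local Notation C := R[i].

Lemma mxadj_mul m n p (A : 'M[C]_(m, n)) (B : 'M[C]_(n, p)) :
  mxadj (A *m B) = mxadj B *m mxadj A.
Proof. by rewrite /mxadj map_mxM trmx_mul. Qed.

Lemma mxadjK m n (A : 'M[C]_(m, n)) : mxadj (mxadj A) = A.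
Proof. by apply/matrixP => i j; rewrite !mxE conjcK. Qed.

Lemma mxadj_diag n (l : 'rV[R]_n) :
  mxadj (diag_mx (map_mx (fun x => x%:C) l)) = diag_mx (map_mx (fun x => x%:C) l).
Proof.
apply/matrixP => i j; rewrite !mxE.
case: (eqVneq i j) => [->|ne]; first by rewrite !mulr1n conjc_real.
by rewrite !mulr0n conjc0.
Qed.

Lemma tstar_adj m n (A : 'M[C]_(m, n)) : map_mx Num.conj (A ^T) = mxadj A.
Proof. by rewrite /mxadj map_trmx. Qed.

Lemma unitary_sym n (U : 'M[C]_n) : unitary U -> mxadj U *m U = 1%:M.
Proof. by move=> H; apply: mulmx1C. Qed.

Definition cmap n (l : 'rV[R]_n) := map_mx (fun x => x%:C) l.

Lemma spec_pd n (A : 'M[C]_n) : Defs.hermitian A ->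
  (forall x : 'cV[C]_n, x != 0 -> 0 < (mxadj x *m A *m x) 0 0) ->
  exists U (l : 'rV[R]_n), [/\ unitary U, (forall j, 0 < l 0 j) &
     A = U *m diag_mx (cmap l) *m mxadj U].
Proof.
move=> hA pA.
have nA : A \is normalmx.
  by apply/normalmxP; rewrite tstar_adj hA.
have := orthomx_spectralP nA.
rewrite invmx_unitary ?spectral_unitarymx // => eA.
set P := spectralmx A in eA; set D := spectral_diag A in eA.
have uP : P *m map_mx Num.conj (P ^T) = 1%:M by apply/unitarymxP/spectral_unitarymx.
rewrite tstar_adj in uP eA.
have uP' : mxadj P *m P = 1%:M by apply: mulmx1C.
have posD : forall j, 0 < D 0 j.
  move=> j; set e : 'cV[C]_n := delta_mx j 0.
  have ne : mxadj P *m e != 0.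
    apply/eqP => /(congr1 (mulmx P)); rewrite mulmxA uP mul1mx mulmx0.
    by move/matrixP => /(_ j 0); rewrite !mxE !eqxx /= => /eqP; rewrite oner_eq0.
  have := pA _ ne; rewrite !mxadj_mul mxadjK eA !mulmxA -(mulmxA _ P) uP mulmx1.
  rewrite -(mulmxA _ P) uP mulmx1.
  have -> : mxadj e = delta_mx 0 j.
    by apply/matrixP => x y; rewrite !mxE conjc_nat andbC.
  by rewrite -rowE -colE !mxE eqxx mulr1n.
exists (mxadj P), (\row_j complex.Re (D 0 j)); split.
- by rewrite /unitary mxadjK.
- move=> j; rewrite mxE; have := posD j; rewrite ltcE => /andP[_].
  by [].
- rewrite mxadjK eA; congr (_ *m _ *m _); congr diag_mx.
  apply/matrixP => i j; rewrite !mxE ord1.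
  have := posD j; rewrite ltcE => /andP[/eqP h _].
  by move: h; case: (D 0 j) => x y /= ->.
Qed.


Lemma ReD (x y : C) : complex.Re (x + y) = complex.Re x + complex.Re y.
Proof. by case: x => ? ?; case: y. Qed.

Lemma Re_sum (I : finType) (F : I -> C) :
  complex.Re (\sum_i F i) = \sum_i complex.Re (F i).
Proof. exact: (big_morph _ ReD). Qed.

Lemma mpowE n (A : 'M[C]_n) (U : 'M[C]_n) (l : 'rV[R]_n) (s : R) : unitary U -> (forall j, 0 < l 0 j) ->
  A = U *m diag_mx (cmap l) *m mxadj U ->
  exists U' (l' : 'rV[R]_n), [/\ unitary U', (forall j, 0 < l' 0 j),
    A = U' *m diag_mx (cmap l') *m mxadj U' &
    mpow A s = U' *m diag_mx (map_mx (fun x => (powR x s)%:C) l') *m mxadj U'].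
Proof.
move=> uU lp eA; rewrite /mpow.
case: xgetP => [B -> [U' [l' [uU' lp' eA' eB]]] | nP].
  by exists U', l'; split.
exfalso; apply: (nP (U *m diag_mx (map_mx (fun x => (powR x s)%:C) l) *m mxadj U)).
by exists U, l; split.
Qed.

Lemma tr_decomp n (U : 'M[C]_n) (l : 'rV[R]_n) : unitary U ->
  \tr (U *m diag_mx (cmap l) *m mxadj U) = \sum_j (l 0 j)%:C.
Proof.
move=> uU; rewrite mxtrace_mulC mulmxA unitary_sym // mul1mx mxtrace_diag.
by apply: eq_bigr => j _; rewrite mxE.
Qed.

Lemma det_decomp n (U : 'M[C]_n) (l : 'rV[R]_n) : unitary U ->
  \det (U *m diag_mx (cmap l) *m mxadj U) = \prod_j (l 0 j)%:C.
Proof.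
move=> uU; rewrite !det_mulmx det_diag mulrAC -det_mulmx uU det1 mul1r.
by apply: eq_bigr => j _; rewrite mxE.
Qed.

Definition wmx n (U V : 'M[C]_n) i j :=
  complex.Re ((mxadj U *m V) i j * ((mxadj U *m V) i j)^*).

Lemma trace_prod n (U V : 'M[C]_n) (a b : 'rV[R]_n) : unitary U ->
  complex.Re (\tr (U *m diag_mx (cmap a) *m mxadj U *m
                  (V *m diag_mx (cmap b) *m mxadj V)))
  = \sum_i \sum_j a 0 i * b 0 j * wmx U V i j.
Proof.
move=> uU.
have -> : \tr (U *m diag_mx (cmap a) *m mxadj U *m (V *m diag_mx (cmap b) *m mxadj V))
  = \tr (diag_mx (cmap a) *m (mxadj U *m V) *m diag_mx (cmap b) *m mxadj (mxadj U *m V)).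
  rewrite -!mulmxA mxtrace_mulC mxadj_mul mxadjK !mulmxA //.
rewrite /wmx; move: (mxadj U *m V) => W.
rewrite /mxtrace Re_sum; apply: eq_bigr => i _.
rewrite mxE Re_sum; apply: eq_bigr => j _.
rewrite mul_mx_diag mul_diag_mx !mxE.
case: (W i j) => x y /=.
ring.
Qed.

Lemma wmx_ge0 n (U V : 'M[C]_n) i j : 0 <= wmx U V i j.
Proof.
rewrite /wmx; case: ((mxadj U *m V) i j) => x y /=.
by rewrite mulrN opprK addr_ge0 // -expr2 sqr_ge0.
Qed.

Lemma wmx_row n (U V : 'M[C]_n) i : unitary U -> unitary V ->
  \sum_j wmx U V i j = 1.
Proof.
move=> uU uV.
have e : (mxadj U *m V) *m mxadj (mxadj U *m V) = 1%:M.
  by rewrite mxadj_mul mxadjK !mulmxA -(mulmxA _ V) uV mulmx1 unitary_sym.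
have := congr1 (fun M : 'M[C]_n => complex.Re (M i i)) e; rewrite /= !mxE Re_sum eqxx mulr1n /=.
move=> <-; by apply: eq_bigr => j _; rewrite /wmx !mxE.
Qed.

Lemma wmx_col n (U V : 'M[C]_n) j : unitary U -> unitary V ->
  \sum_i wmx U V i j = 1.
Proof.
move=> uU uV.
have e : mxadj (mxadj U *m V) *m (mxadj U *m V) = 1%:M.
  by rewrite mxadj_mul mxadjK !mulmxA -(mulmxA _ U) uU mulmx1 unitary_sym.
have := congr1 (fun M : 'M[C]_n => complex.Re (M j j)) e; rewrite /= !mxE Re_sum eqxx mulr1n /=.
move=> <-; by apply: eq_bigr => i _; rewrite /wmx !mxE mulrC.
Qed.

Lemma tens_eq m n (k k' : 'I_(m * n)) :
  (k == k') = ((mxtens_unindex k).1 == (mxtens_unindex k').1) &&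
              ((mxtens_unindex k).2 == (mxtens_unindex k').2).
Proof.
rewrite -(inj_eq (can_inj (@mxtens_unindexK m n))).
by case: (mxtens_unindex k) => a b; case: (mxtens_unindex k') => c d.
Qed.

Lemma tens1 m n : (1%:M : 'M[C]_m) *t (1%:M : 'M[C]_n) = 1%:M.
Proof.
apply/matrixP => k k'; rewrite !mxE tens_eq.
by case: (_ == _); case: (_ == _); rewrite ?mulr1n ?mulr0n ?mul1r ?mul0r ?mulr0.
Qed.

Definition tl m n (l1 : 'rV[R]_m) (l2 : 'rV[R]_n) : 'rV[R]_(m * n) :=
  \row_k (l1 0 (mxtens_unindex k).1 * l2 0 (mxtens_unindex k).2).

Lemma tens_diag m n (l1 : 'rV[R]_m) (l2 : 'rV[R]_n) :
  diag_mx (cmap l1) *t diag_mx (cmap l2) = diag_mx (cmap (tl l1 l2)).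
Proof.
apply/matrixP => k k'; rewrite !mxE tens_eq.
case: (_ == _); case: (_ == _); rewrite ?mulr1n ?mulr0n ?mul1r ?mul0r ?mulr0 //.
by rewrite rmorphM.
Qed.

Lemma mxadj_tens m n p q (A : 'M[C]_(m, n)) (B : 'M[C]_(p, q)) :
  mxadj (A *t B) = mxadj A *t mxadj B.
Proof. by rewrite /mxadj map_mxT trmx_tens. Qed.

Lemma unitary_tens m n (U1 : 'M[C]_m) (U2 : 'M[C]_n) :
  unitary U1 -> unitary U2 -> unitary (U1 *t U2).
Proof.
by move=> u1 u2; rewrite /unitary mxadj_tens tensmx_mul u1 u2 tens1.
Qed.

Lemma tens_decomp m n (A : 'M[C]_m) (B : 'M[C]_n) (U1 : 'M[C]_m) (U2 : 'M[C]_n) (l1 : 'rV[R]_m) (l2 : 'rV[R]_n) :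
  A = U1 *m diag_mx (cmap l1) *m mxadj U1 ->
  B = U2 *m diag_mx (cmap l2) *m mxadj U2 ->
  A *t B = (U1 *t U2) *m diag_mx (cmap (tl l1 l2)) *m mxadj (U1 *t U2).
Proof. by move=> -> ->; rewrite mxadj_tens -tens_diag !tensmx_mul. Qed.

Lemma sum_tl m n (l1 : 'rV[R]_m) (l2 : 'rV[R]_n) :
  \sum_k tl l1 l2 0 k = (\sum_i l1 0 i) * (\sum_j l2 0 j).
Proof. by rewrite mulr_sum; apply: eq_bigr => k _; rewrite mxE. Qed.

Lemma sum_tens (V : nmodType) m n (F : 'I_(m * n) -> V) :
  \sum_k F k = \sum_i \sum_j F (mxtens_index (i, j)).
Proof.
rewrite pair_big /= (reindex (@mxtens_index m n)) /=; last first.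
  by exists (@mxtens_unindex m n) => k _; [apply: mxtens_indexK | apply: mxtens_unindexK].
by apply: eq_bigr => -[i j].
Qed.

Lemma tr_ptrace dA dB (rho : 'M[C]_(dA * dB)) : \tr (ptraceB rho) = \tr rho.
Proof.
by rewrite /mxtrace sum_tens; apply: eq_bigr => i _; rewrite mxE.
Qed.

Lemma herm_ptrace dA dB (rho : 'M[C]_(dA * dB)) :
  Defs.hermitian rho -> Defs.hermitian (ptraceB rho).
Proof.
move=> h; apply/matrixP => i i'; rewrite !mxE rmorph_sum.
apply: eq_bigr => j _.
by rewrite -{2}h !mxE.
Qed.

Definition Emx dA dB (j : 'I_dB) : 'M[C]_(dA * dB, dA) :=
  \matrix_(k, i) ((k == mxtens_index (i, j))%:R).

Lemma sum_deltar m (F : 'I_m -> C) c : \sum_k F k * (k == c)%:R = F c.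
Proof.
rewrite (bigD1 c) //= eqxx mulr1 big1 ?addr0 // => k /negbTE ->.
by rewrite mulr0.
Qed.

Lemma sum_deltal m (F : 'I_m -> C) c : \sum_k (k == c)%:R * F k = F c.
Proof.
rewrite (bigD1 c) //= eqxx mul1r big1 ?addr0 // => k /negbTE ->.
by rewrite mul0r.
Qed.

Lemma ptrace_sum dA dB (rho : 'M[C]_(dA * dB)) :
  ptraceB rho = \sum_j mxadj (Emx dA j) *m rho *m Emx dA j.
Proof.
apply/matrixP => i i'; rewrite summxE mxE; apply: eq_bigr => j _.
rewrite !mxE.
rewrite (eq_bigr (fun k => (\sum_k0 (k0 == mxtens_index (i, j))%:R * rho k0 k) *
                 (k == mxtens_index (i', j))%:R)); last first.
  move=> k _; rewrite !mxE; congr (_ * _); apply: eq_bigr => k0 _; by rewrite !mxE conjc_nat.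
by rewrite sum_deltar sum_deltal.
Qed.

Lemma pd_ptrace dA dB (rho : 'M[C]_(dA * dB)) : (0 < dB)%N ->
  (forall x : 'cV[C]_(dA * dB), x != 0 -> 0 < (mxadj x *m rho *m x) 0 0) ->
  forall x : 'cV[C]_dA, x != 0 -> 0 < (mxadj x *m ptraceB rho *m x) 0 0.
Proof.
move=> dB0 pr x x0.
rewrite ptrace_sum mulmx_sumr mulmx_suml summxE.
have term : forall j, 0 < (mxadj x *m (mxadj (Emx dA j) *m rho *m Emx dA j) *m x) 0 0.
  move=> j; have -> : mxadj x *m (mxadj (Emx dA j) *m rho *m Emx dA j) *m x =
     mxadj (Emx dA j *m x) *m rho *m (Emx dA j *m x).
    by rewrite mxadj_mul !mulmxA.
  apply: pr; apply: contra x0 => /eqP e; apply/eqP/matrixP => i z.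
  have := congr1 (fun M : 'cV[C]_(dA * dB) => M (mxtens_index (i, j)) 0) e.
  rewrite /= !mxE => <-; rewrite ord1.
  rewrite (eq_bigr (fun i' => (i' == i)%:R * x i' 0)); first by rewrite sum_deltal.
  move=> i' _; rewrite !mxE (inj_eq (can_inj (@mxtens_indexK dA dB))) xpair_eqE eqxx andbT.
  by rewrite eq_sym.
rewrite (bigD1 (Ordinal dB0)) //= ltr_pwDl //.
by apply: sumr_ge0 => j _; apply: ltW.
Qed.

End Aux.

Section Real.
Variable R : realType.

Lemma ln_le_sub1 (y : R) : 0 < y -> ln y <= y - 1.
Proof.
move=> y0; have h : -1 < y - 1 by lra.
by have := le_ln1Dx h; rewrite addrCA subrr addr0.
Qed.

Lemma wsum_gt0 (I : finType) (p x : I -> R) :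
  (forall k, 0 <= p k) -> \sum_k p k = 1 -> (forall k, 0 < x k) ->
  0 < \sum_k p k * x k.
Proof.
move=> p0 p1 x0.
have [k /andP[_ pk]] : exists k, true && (0 < p k).
  apply: psumr_neq0P => //; by rewrite p1 => /eqP; rewrite oner_eq0.
rewrite (bigD1 k) //= ltr_pwDl ?mulr_gt0 //.
by apply: sumr_ge0 => i _; rewrite mulr_ge0 // ltW.
Qed.

Lemma jensen_ln (I : finType) (p x : I -> R) :
  (forall k, 0 <= p k) -> \sum_k p k = 1 -> (forall k, 0 < x k) ->
  \sum_k p k * ln (x k) <= ln (\sum_k p k * x k).
Proof.
move=> p0 p1 x0; set M := \sum_k p k * x k.
have M0 : 0 < M by apply: wsum_gt0.
rewrite -subr_le0.
have -> : ln M = \sum_k p k * ln M by rewrite -mulr_suml p1 mul1r.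
rewrite -sumrB.
apply: (le_trans (y := \sum_k p k * (x k / M - 1))).
  apply: ler_sum => k _; rewrite -mulrBr ler_wpM2l //.
  rewrite -ln_div ?posrE //; apply: ln_le_sub1; exact: divr_gt0.
rewrite (eq_bigr (fun k => p k * x k / M - p k)); last first.
  by move=> k _; rewrite mulrBr mulr1 mulrA.
rewrite sumrB -mulr_suml p1 divff ?subrr //; exact: lt0r_neq0.
Qed.

Lemma ln_prod (I : finType) (x : I -> R) : (forall k, 0 < x k) ->
  ln (\prod_k x k) = \sum_k ln (x k).
Proof.
move=> x0; rewrite /index_enum; elim: (Finite.enum I) => [|k s IH].
  by rewrite !big_nil ln1.
rewrite !big_cons lnM ?IH // posrE //.
by apply: prodr_gt0.
Qed.

Lemma amgm_ln n (mu : 'I_n -> R) : (0 < n)%N -> (forall k, 0 < mu k) ->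
  \sum_k mu k = 1 -> n%:R^-1 * \sum_k ln (mu k) <= - ln n%:R.
Proof.
move=> n0 mu0 mu1.
have nR : 0 < n%:R :> R by rewrite ltr0n.
have := @jensen_ln _ (fun _ => n%:R^-1) mu.
rewrite -mulr_sumr -mulr_sumr mu1 mulr1 sumr_const card_ord.
rewrite lnV ?posrE //; apply => //.
- by move=> k; rewrite invr_ge0 ltW.
- by rewrite -(mulr_natr (n%:R^-1 : R) n) mulVf // gt_eqF.
Qed.

Lemma main_ineq n (x y : 'I_n -> R) (w : 'I_n -> 'I_n -> R) : (0 < n)%N ->
  (forall i, 0 < x i) -> (forall j, 0 < y j) -> (forall i j, 0 <= w i j) ->
  (forall i, \sum_j w i j = 1) -> (forall j, \sum_i w i j = 1) ->
  ln n%:R + n%:R^-1 * (\sum_i ln (x i) + \sum_j ln (y j))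
   <= ln (\sum_i \sum_j x i * y j * w i j).
Proof.
move=> n0 x0 y0 w0 wr wc.
have nR : 0 < n%:R :> R by rewrite ltr0n.
pose p (k : 'I_n * 'I_n) := n%:R^-1 * w k.1 k.2.
pose z (k : 'I_n * 'I_n) := x k.1 * y k.2.
have p0 : forall k, 0 <= p k by move=> k; rewrite mulr_ge0 // invr_ge0 ltW.
have p1 : \sum_k p k = 1.
  rewrite -mulr_sumr -(pair_big xpredT xpredT (fun i j => w i j)) /=.
  rewrite (eq_bigr (fun=> 1)) // sumr_const card_ord mulVf //.
  by rewrite gt_eqF.
have z0 : forall k, 0 < z k by move=> k; rewrite mulr_gt0.
have := jensen_ln p0 p1 z0.
have -> : \sum_k p k * z k = n%:R^-1 * \sum_i \sum_j x i * y j * w i j.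
  rewrite (pair_big xpredT xpredT (fun i j => x i * y j * w i j)) mulr_sumr.
  by apply: eq_bigr => k _; rewrite /p /z; ring.
have -> : \sum_k p k * ln (z k) = n%:R^-1 * (\sum_i ln (x i) + \sum_j ln (y j)).
  rewrite -(pair_big xpredT xpredT (fun i j => p (i, j) * ln (z (i, j)))) /=.
  rewrite /p /z.
  transitivity (\sum_i \sum_j (n%:R^-1 * ln (x i) * w i j + n%:R^-1 * ln (y j) * w i j)).
    apply: eq_bigr => i _; apply: eq_bigr => j _; rewrite lnM ?posrE //; ring.
  transitivity (\sum_i (n%:R^-1 * ln (x i) + \sum_j n%:R^-1 * ln (y j) * w i j)).
    by apply: eq_bigr => i _; rewrite big_split /= -mulr_sumr wr mulr1.
  rewrite big_split /= exchange_big /=.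
  transitivity (\sum_i n%:R^-1 * ln (x i) + \sum_j n%:R^-1 * ln (y j)).
    congr (_ + _); apply: eq_bigr => j _; by rewrite -mulr_sumr wc mulr1.
  by rewrite -!mulr_sumr mulrDr.
have S0 : 0 < \sum_i \sum_j x i * y j * w i j.
  have := wsum_gt0 p0 p1 z0.
  have -> : \sum_k p k * z k = n%:R^-1 * \sum_i \sum_j x i * y j * w i j.
    rewrite (pair_big xpredT xpredT (fun i j => x i * y j * w i j)) mulr_sumr.
    by apply: eq_bigr => k _; rewrite /p /z; ring.
  by rewrite pmulr_rgt0 // invr_gt0.
rewrite lnM ?posrE ?invr_gt0 // lnV ?posrE //.
move=> h; have := h; lra.
Qed.

End Real.

Section Main.
Variable R : realType.
Local Notation C := R[i].

Lemma cmap_pow n (l : 'rV[R]_n) s :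
  map_mx (fun x => (powR x s)%:C) l = cmap (map_mx (fun x => powR x s) l).
Proof. by apply/matrixP => i j; rewrite !mxE. Qed.

Lemma ReC (x : R) : complex.Re (x%:C) = x. Proof. by []. Qed.

Lemma sum_from_tr n (A : 'M[C]_n) (U : 'M[C]_n) (l : 'rV[R]_n) : unitary U ->
  A = U *m diag_mx (cmap l) *m mxadj U -> \tr A = 1 -> \sum_j l 0 j = 1.
Proof.
move=> uU -> ; rewrite tr_decomp // -rmorph_sum => h.
by have := congr1 (@complex.Re R) h; rewrite ReC.
Qed.

Lemma Redet n (A : 'M[C]_n) (U : 'M[C]_n) (l : 'rV[R]_n) : unitary U ->
  A = U *m diag_mx (cmap l) *m mxadj U -> complex.Re (\det A) = \prod_j l 0 j.
Proof. by move=> uU ->; rewrite det_decomp // -rmorph_prod ReC. Qed.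

End Main.

Theorem mainTheorem6 (R : realType) (b : R) (dA dB : nat)
    (rho : 'M[R[i]]_(dA * dB)) (a : R) :
  1 < b -> posdef rho -> density rho -> 1 < a ->
  a / (a - 1) * (logb b (dA * dB)%:R
                 + ((dA * dB)%:R)^-1 * logb b (complex.Re (\det rho)))
  <= Ialpha b a rho.
Proof.
move=> b1 [hr pr] [_ tr1] a1.
have n0 : (0 < dA * dB)%N.
  rewrite lt0n; apply/eqP => e; move: tr1.
  rewrite /mxtrace big1 => [/eqP|i _]; first by rewrite eq_sym oner_eq0.
  by have := ltn_ord i; rewrite {2}e.
have dB0 : (0 < dB)%N by move: n0; rewrite muln_gt0 => /andP[].
have lb : 0 < ln b by apply: ln_gt0.
have nR : 0 < (dA * dB)%:R :> R by rewrite ltr0n.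
have rho_fact : forall (U : 'M[R[i]]_(dA * dB)) (l : 'rV[R]_(dA * dB)),
    unitary U -> (forall j, 0 < l 0 j) -> rho = U *m diag_mx (cmap l) *m mxadj U ->
    ln (complex.Re (\det rho)) = \sum_j ln (l 0 j) /\
    ((dA * dB)%:R)^-1 * \sum_j ln (l 0 j) <= - ln (dA * dB)%:R.
  move=> U l uU lp eR; split.
    by rewrite (Redet uU eR) ln_prod.
  apply: amgm_ln => //; exact: (sum_from_tr uU eR).
have [U0 [l0 [uU0 lp0 eR0]]] := spec_pd hr pr.
rewrite /Ialpha; set S := (X in inf X).
case: (pselect (S !=set0)%classic) => [ne | e]; last first.
  have -> : S = set0 by apply/nonemptyPn.
  rewrite /inf image_set0 sup0 oppr0.
  have [h1 h2] := rho_fact U0 l0 uU0 lp0 eR0.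
  rewrite /logb h1.
  set L := ln _ in h2 *; set SL := \sum_j _ in h1 h2 *.
  set ni := _^-1 in h2 *.
  have : ni * SL + L <= 0 by lra.
  have a0 : 0 < a / (a - 1) by apply: divr_gt0; lra.
  move=> h.
  have -> : L / ln b + ni * (SL / ln b) = (ni * SL + L) / ln b.
    by rewrite mulrA -mulrDl addrC.
  apply: mulr_ge0_le0; first exact: ltW.
  by apply: mulr_le0_ge0 => //; rewrite invr_ge0 ltW.
apply: lb_le_inf => // x [sigma [[hs ps] [_ ts] ->]].
have [U2 [l2 [u2 l2p e2]]] := spec_pd hs ps.
have [U1 [l1 [u1 l1p e1]]] := spec_pd (herm_ptrace hr) (pd_ptrace dB0 pr).
have eT := tens_decomp e1 e2.
have tlp : forall j, 0 < tl l1 l2 0 j by move=> j; rewrite mxE mulr_gt0.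
have [V [mu [uV mup eT' eMT]]] := mpowE (1 - a) (unitary_tens u1 u2) tlp eT.
have [U [l [uU lp eR eMR]]] := mpowE a uU0 lp0 eR0.
have s1 : \sum_j l1 0 j = 1 by apply: (sum_from_tr u1 e1); rewrite tr_ptrace.
have s2 : \sum_j l2 0 j = 1 := sum_from_tr u2 e2 ts.
have trT : \tr (ptraceB rho *t sigma) = 1.
  rewrite eT tr_decomp; last exact: unitary_tens u1 u2.
  by rewrite -rmorph_sum sum_tl s1 s2 mulr1.
have smu : \sum_j mu 0 j = 1 := sum_from_tr uV eT' trT.
have [h1 h2] := rho_fact U l uU lp eR.
have hmu := amgm_ln n0 mup smu.
rewrite /Dalpha eMR eMT !cmap_pow trace_prod //.
have hm := main_ineq (x := fun i => powR (l 0 i) a) (y := fun j => powR (mu 0 j) (1 - a))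
  n0 (fun i => powR_gt0 a (lp i)) (fun j => powR_gt0 (1 - a) (mup j)) (@wmx_ge0 _ _ U V)
  (fun i => wmx_row i uU uV) (fun j => wmx_col j uU uV).
rewrite (eq_bigr (fun i => \sum_j powR (l 0 i) a * powR (mu 0 j) (1 - a) * wmx U V i j)); last first.
  by move=> i _; apply: eq_bigr => j _; rewrite !mxE.
set T := \sum_i _ in hm *.
have e1' : \sum_i ln (powR (l 0 i) a) = a * \sum_i ln (l 0 i).
  by rewrite mulr_sumr; apply: eq_bigr => i _; rewrite ln_powR.
have e2' : \sum_j ln (powR (mu 0 j) (1 - a)) = (1 - a) * \sum_j ln (mu 0 j).
  by rewrite mulr_sumr; apply: eq_bigr => i _; rewrite ln_powR.
rewrite e1' e2' in hm.
rewrite /logb h1.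
set L := ln _ in h2 hmu hm *; set SL := \sum_j ln (l 0 j) in h1 h2 hm *.
set SM := \sum_j ln (mu 0 j) in hmu hm *.
set ni := _^-1 in h2 hmu hm *.
set lT := ln T in hm *.
have hm' : L + (a * (ni * SL) + (1 - a) * (ni * SM)) <= lT.
  by move: hm; rewrite mulrDr !mulrA (mulrC ni a) (mulrC ni (1 - a)).
have hp : 0 <= (a - 1) * (- L - ni * SM) by apply: mulr_ge0; lra.
have key : a * (L + ni * SL) <= lT by nra.
have -> : a / (a - 1) * (L / ln b + ni * (SL / ln b)) =
  a * (L + ni * SL) * ((a - 1)^-1 * (ln b)^-1) by ring.
have -> : (a - 1)^-1 * (lT / ln b) = lT * ((a - 1)^-1 * (ln b)^-1) by ring.
apply: ler_wpM2r => //.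
by apply: mulr_ge0; rewrite invr_ge0; [lra | exact: ltW].
Qed.
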